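(* Let $W:\mathbb{N}^\star\times\mathbb{N}^\star\to\mathbb{C}$ be such that $F\,\square_W\,G\in\mathbb{M}$ and $F\,\square_W\,G=G\,\square_W\,F$ for all $F,G\in\mathbb{M}$. Then $(F\,\square_W\,G)\,\square_W\,H=F\,\square_W\,(G\,\square_W\,H)$ for all $F,G,H\in\mathbb{M}$ if and only if $W(a,b)W(ab,c)=W(b,c)W(bc,a)$ for all $a,b,c\in\mathbb{N}^\star$.
   Context: $\mathbb{M}$ is the set of functions $F:\mathbb{N}^\star\to\mathbb{C}$ with $F(1)=1$ and $F(ab)=F(a)F(b)$ whenever $\gcd(a,b)=1$. For a weight $W$, $(F\,\square_W\,G)(m)=\sum_{ab=m}F(a)G(b)W(a,b)$. *)

(* Defs.v *)
(* The complex numbers C are rendered as an arbitrary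
   numeric algebraically closed field (numClosedFieldType). *)
From HB Require Import structures.
From mathcomp Require Import all_boot all_order all_algebra.
Set Implicit Arguments. Unset Strict Implicit. Unset Printing Implicit Defensive.
Import Order.TTheory GRing.Theory Num.Theory.
Local Open Scope ring_scope.

(* Functions N* -> C are represented as nat -> C; only values at n >= 1 matter. *)

Definition arith_mult (C : numClosedFieldType) (F : nat -> C) : Prop :=
  F 1%N = 1 /\
  forall a b : nat, (0 < a)%N -> (0 < b)%N -> coprime a b -> F (a * b)%N = F a * F b.

Definition wconv (C : numClosedFieldType) (W : nat -> nat -> C) (F G : nat -> C)
  (m : nat) : C :=
  \sum_(a <- divisors m) F a * G (m %/ a)%N * W a (m %/ a)%N.

(* Main.v *)
Require Import Defs.
From HB Require Import structures.
From mathcomp Require Import all_boot all_order all_algebra.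
From mathcomp Require Import zify ring.
Import Order.TTheory GRing.Theory Num.Theory.
Local Open Scope ring_scope.

Lemma sum_if {C : numClosedFieldType} (N a : nat) (f : nat -> C) :
  \sum_(0 <= i < N) (if (i == a)%N then f i else 0) = if (a < N)%N then f a else 0.
Proof.
elim: N => [|N IH]; first by rewrite big_geq.
rewrite big_nat_recr //= IH.
case: (ltngtP a N) => h.
- by rewrite ltnS ltnW // addr0.
- by rewrite ltnS leqNgt h addr0.
- by rewrite h ltnSn add0r.
Qed.

Lemma sum_pt {C : numClosedFieldType} (N a : nat) (f : nat -> C) :
  (forall i, (i != a)%N -> f i = 0) -> (a < N)%N ->
  \sum_(0 <= i < N) f i = f a.
Proof.
move=> hf aN.
rewrite (eq_bigr (fun i => if (i == a)%N then f a else 0)) ?sum_if ?aN //.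
by move=> i _; case: eqP => [->|/eqP]; [done| exact: hf].
Qed.

Lemma sum_div2 {C : numClosedFieldType} (m N : nat) (f : nat -> nat -> C) :
  (0 < m)%N -> (m < N)%N ->
  \sum_(d <- divisors m) f d (m %/ d)%N =
  \sum_(0 <= x < N) \sum_(0 <= y < N) (if (x * y == m)%N then f x y else 0).
Proof.
move=> m0 mN.
transitivity (\sum_(0 <= x < N) (if (x %| m)%N then f x (m %/ x)%N else 0)).
  rewrite -[RHS]big_mkcond /= -[RHS]big_filter; apply: perm_big; apply: uniq_perm.
  - exact: divisors_uniq.
  - by rewrite filter_uniq // iota_uniq.
  - move=> x; rewrite mem_filter mem_iota -dvdn_divisors //.
    case: (boolP (x %| m)%N) => //= xm; have := dvdn_leq m0 xm; lia.
apply: eq_bigr => x _; case: ifP => xm.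
- have x0 : (0 < x)%N by case: x xm => //; rewrite dvd0n => /eqP e; move: m0; rewrite e.
  rewrite (eq_bigr (fun y => if (y == m %/ x)%N then f x (m %/ x)%N else 0)).
    by rewrite sum_if ifT //; apply: leq_ltn_trans (leq_div m x) mN.
  move=> y _.
  have -> : (x * y == m)%N = (y == m %/ x)%N.
    by apply/eqP/eqP => [<-|->]; [rewrite mulKn | rewrite mulnC divnK].
  by case: eqP => // ->.
- rewrite big1 // => y _; case: eqP => // e.
  by move: xm; rewrite -e dvdn_mulr.
Qed.

Definition T3 {C : numClosedFieldType} (m : nat) (g : nat -> nat -> nat -> C) :=
  \sum_(0 <= x < m.+1) \sum_(0 <= y < m.+1) \sum_(0 <= z < m.+1)
     (if (x * y * z == m)%N then g x y z else 0).

Lemma collapse {C : numClosedFieldType} N a (k : nat -> C) :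
  \sum_(0 <= d < N) (if (a == d)%N then k d else 0) = if (a < N)%N then k a else 0.
Proof.
rewrite -sum_if; apply: eq_bigr => d _; rewrite eq_sym; by case: eqP => // ->.
Qed.

Lemma pointA {C : numClosedFieldType} (W : nat -> nat -> C) F G H m d e :
  (0 < m)%N ->
  (if (d * e == m)%N then wconv W F G d * H e * W d e else 0) =
  \sum_(0 <= x < m.+1) \sum_(0 <= y < m.+1)
    (if (x * y == d)%N then
       (if (d * e == m)%N then F x * G y * W x y * H e * W (x * y)%N e else 0)
     else 0).
Proof.
move=> m0; case: (boolP (d * e == m)%N) => de; last first.
  by rewrite big1 // => x _; rewrite big1 // => y _; case: ifP.
have e0 : (0 < e)%N by move/eqP: de => de; case: e de => //; rewrite muln0 => de; move: m0; rewrite -de.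
have d0 : (0 < d)%N by move/eqP: de => de; case: d de => // de; move: m0; rewrite -de.
have dN : (d < m.+1)%N by rewrite ltnS -(eqP de) leq_pmulr.
rewrite /wconv (@sum_div2 _ d m.+1 (fun a b => F a * G b * W a b) d0 dN) !mulr_suml.
apply: eq_bigr => x _; rewrite !mulr_suml; apply: eq_bigr => y _.
by case: eqP => [<-|]; rewrite ?mul0r.
Qed.

Lemma assocT {C : numClosedFieldType} (W : nat -> nat -> C) F G H m :
  (0 < m)%N -> wconv W (wconv W F G) H m =
  T3 m (fun x y z => F x * G y * W x y * H z * W (x * y)%N z).
Proof.
move=> m0; rewrite {1}/wconv.
rewrite (@sum_div2 _ m m.+1 (fun d e => wconv W F G d * H e * W d e) m0 (ltnSn m)).
under eq_bigr => d _ do under eq_bigr => e _ do rewrite (pointA W F G H m d e m0).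
rewrite exchange_big /=.
under eq_bigr => e _ do rewrite exchange_big /=.
under eq_bigr => e _ do under eq_bigr => x _ do rewrite exchange_big /=.
under eq_bigr => e _ do under eq_bigr => x _ do under eq_bigr => y _ do rewrite collapse.
rewrite exchange_big /=; rewrite /T3; apply: eq_bigr => x _.
rewrite exchange_big /=; apply: eq_bigr => y _; apply: eq_bigr => z _.
case: (boolP (x * y * z == m)%N) => h //.
have z0 : (0 < z)%N by case: z h => //; rewrite muln0 => /eqP h; move: m0; rewrite -h.
  by rewrite ifT // ltnS -(eqP h) leq_pmulr.
by case: ifP.
Qed.

Lemma T3_rot {C : numClosedFieldType} m (g : nat -> nat -> nat -> C) :
  T3 m (fun x y z => g y z x) = T3 m g.
Proof.
rewrite /T3 exchange_big /=.
under eq_bigr => y _ do rewrite exchange_big /=.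
apply: eq_bigr => y _; apply: eq_bigr => z _; apply: eq_bigr => x _.
by rewrite [(y * z * x)%N]mulnC mulnA.
Qed.

Lemma key3 (a b c x y z : nat) : (0 < a)%N -> (0 < b)%N -> (0 < c)%N ->
  (x %| a)%N -> (y %| b)%N -> (z %| c)%N -> (x * y * z = a * b * c)%N ->
  [/\ x = a, y = b & z = c].
Proof.
move=> a0 b0 c0 /dvdnP [k ea] /dvdnP [l eb] /dvdnP [n ec] e; subst a b c.
have x0 : (0 < x)%N by move: a0; rewrite muln_gt0 => /andP[].
have y0 : (0 < y)%N by move: b0; rewrite muln_gt0 => /andP[].
have z0 : (0 < z)%N by move: c0; rewrite muln_gt0 => /andP[].
have : (k * l * n * (x * y * z) = 1 * (x * y * z))%N.
  rewrite mul1n {2}e; lia.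
move/eqP; rewrite eqn_pmul2r ?muln_gt0 ?x0 ?y0 ?z0 //.
rewrite !muln_eq1 => /andP [/andP [/eqP -> /eqP ->] /eqP ->].
by rewrite !mul1n.
Qed.

Lemma T3_pick {C : numClosedFieldType} m a b c (g : nat -> nat -> nat -> C) :
  (0 < a)%N -> (0 < b)%N -> (0 < c)%N -> m = (a * b * c)%N ->
  (forall x y z, ~~ [&& (x %| a)%N, (y %| b)%N & (z %| c)%N] -> g x y z = 0) ->
  T3 m g = g a b c.
Proof.
move=> a0 b0 c0 -> hg.
have tz : forall x y z, [|| x != a, y != b | z != c] ->
   (if (x * y * z == a * b * c)%N then g x y z else 0) = 0.
  move=> x y z h; case: eqP => // e.
  case: (boolP [&& (x %| a)%N, (y %| b)%N & (z %| c)%N]); last exact: hg.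
  case/and3P => xa yb zc; have [ex ey ez] := key3 a b c x y z a0 b0 c0 xa yb zc e.
  by move: h; rewrite ex ey ez !eqxx.
have aN : (a < (a * b * c).+1)%N by rewrite ltnS -mulnA leq_pmulr // muln_gt0 b0.
have bN : (b < (a * b * c).+1)%N by rewrite ltnS mulnAC leq_pmull // muln_gt0 a0.
have cN : (c < (a * b * c).+1)%N by rewrite ltnS leq_pmull // muln_gt0 a0.
rewrite /T3 (@sum_pt _ _ a) //; last first.
  by move=> x xa; rewrite big1 // => y _; rewrite big1 // => z _; rewrite tz // xa.
rewrite (@sum_pt _ _ b) //; last first.
  by move=> y yb; rewrite big1 // => z _; rewrite tz // yb orbT.
rewrite (@sum_pt _ _ c) //; last first.
  by move=> z zc; rewrite tz // zc !orbT.
by rewrite eqxx.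
Qed.

Lemma ind_mult {C : numClosedFieldType} a :
  arith_mult (fun n => if (n %| a)%N then (1 : C) else 0).
Proof.
split; first by rewrite dvd1n.
move=> x y _ _ cxy; rewrite Gauss_dvd //.
by case: (x %| a)%N; case: (y %| a)%N; rewrite ?mul1r ?mul0r.
Qed.

Theorem mainTheorem7 (C : numClosedFieldType) (W : nat -> nat -> C)
  (hM : forall F G : nat -> C, arith_mult F -> arith_mult G ->
          arith_mult (wconv W F G))
  (hComm : forall F G : nat -> C, arith_mult F -> arith_mult G ->
          forall m : nat, (0 < m)%N -> wconv W F G m = wconv W G F m) :
  (forall F G H : nat -> C, arith_mult F -> arith_mult G -> arith_mult H ->
     forall m : nat, (0 < m)%N ->
       wconv W (wconv W F G) H m = wconv W F (wconv W G H) m)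
  <->
  (forall a b c : nat, (0 < a)%N -> (0 < b)%N -> (0 < c)%N ->
     W a b * W (a * b)%N c = W b c * W (b * c)%N a).
Proof.
split.
- move=> hA a b c a0 b0 c0.
  pose I := fun k n => if (n %| k)%N then (1 : C) else 0.
  have m0 : (0 < a * b * c)%N by rewrite !muln_gt0 a0 b0 c0.
  have := hA (I a) (I b) (I c) (ind_mult a) (ind_mult b) (ind_mult c) _ m0.
  rewrite (hComm (I a) (wconv W (I b) (I c)) (ind_mult a)
             (hM _ _ (ind_mult b) (ind_mult c)) _ m0) !assocT //.
  rewrite (@T3_pick _ _ a b c) //; last first.
    move=> x y z; rewrite /I.
    by case: (x %| a)%N; case: (y %| b)%N; case: (z %| c)%N => //= _; rewrite ?(mul0r, mulr0, mul1r, mulr1).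
  rewrite (@T3_pick _ _ b c a) //; last 2 first.
  + by rewrite [RHS]mulnC mulnA.
  + move=> x y z; rewrite /I.
    by case: (x %| b)%N; case: (y %| c)%N; case: (z %| a)%N => //= _; rewrite ?(mul0r, mulr0, mul1r, mulr1).
  by rewrite /I !dvdnn !mul1r !mulr1.
- move=> hW F G H hF hG hH m m0.
  rewrite (hComm F (wconv W G H) hF (hM G H hG hH) m m0) !assocT //.
  rewrite -[in RHS]T3_rot /T3; apply: eq_bigr => x _; apply: eq_bigr => y _; apply: eq_bigr => z _.
  case: eqP => // e.
  have x0 : (0 < x)%N by case: x e => //= e; move: m0; rewrite -e.
  have y0 : (0 < y)%N by case: y e => //=; rewrite muln0 => e; move: m0; rewrite -e.
  have z0 : (0 < z)%N by case: z e => //=; rewrite muln0 => e; move: m0; rewrite -e.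
  have := hW x y z x0 y0 z0.
  move=> hw.
  transitivity ((F x * G y * H z) * (W x y * W (x * y)%N z)); first by ring.
  by rewrite hw; ring.
Qed.
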